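(* Let $\mathcal C\subseteq2^{[n]}$ be a stable hyperplane code. Then $\mathcal C$ has no sphere link obstructions: there is no non-maximal face $F$ of the polar complex $\Gamma(\mathcal C)$ such that $\operatorname{link}_F\Gamma(\mathcal C)$ is neither collapsible nor equal to $\Gamma(2^{[n]\setminus\underline F})$.
   Context: A code is a subset $\mathcal C\subseteq 2^{[n]}$. An oriented affine hyperplane in $\mathbb R^d$ is $H=\{x: w\cdot x-h=0\}$ with $w\neq0$, and $H^{+}=\{w\cdot x-h>0\}$, $H^-=\{w\cdot x-h<0\}$. For hyperplanes $\mathcal H=\{H_1,\dots,H_n\}$ and open convex $X\subseteq\mathbb R^d$, the atom of $\sigma\subseteq[n]$ is $A_\sigma=\bigl(\bigcap_{i\in\sigma}(H_i^+\cap X)\bigr)\setminus\bigcup_{j\notin\sigma}H_j^+$ ($A_\emptyset=X\setminus\bigcup_iH_i^+$), and $\mathrm{code}(\mathcal H,X)=\{\sigma:A_\sigma\neq\emptyset\}$. $(\mathcal H,X)$ is stable if $X$ is open convex and whenever $X\cap\bigcap_{i\in\sigma}H_i\ne\emptyset$, $\dim\bigcap_{i\in\sigma}H_i=d-|\sigma|$. A stable hyperplane code is $\mathrm{code}(\mathcal H,X)$ for a stable pair. Polar complex: on vertex set $[n]\sqcup\overline{[n]}$, $\overline{[n]}=\{\bar1,\dots,\bar n\}$, let $\Sigma(\sigma)=\sigma\sqcup\{\bar i:i\in[n]\setminus\sigma\}$ and $\Gamma(\mathcal C)$ be the simplicial complex of all subsets of the sets $\Sigma(\sigma)$, $\sigma\in\mathcal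 C$. For a face $F$ write $F=F^+\sqcup\{\bar j:j\in F^-\}$ with $F^\pm\subseteq[n]$; its support is $\underline F=F^+\cup F^-$. For $S\subseteq[n]$, $\Gamma(2^S)$ is the simplicial complex on $S\sqcup\{\bar i:i\in S\}$ whose faces are all subsets containing no pair $\{i,\bar i\}$ (for $S=\emptyset$ it is $\{\emptyset\}$). $\operatorname{link}_F\Delta=\{\nu\in\Delta:\nu\cap F=\emptyset,\nu\cup F\in\Delta\}$. A free pair in $\Delta$ is $(\sigma,\tau)$ with $\tau$ a facet, $\sigma\subsetneq\tau$, $\sigma$ in no other facet; collapsing along $\sigma$ gives $\{\nu\in\Delta:\nu\not\supseteq\sigma\}$; $\Delta$ is collapsible if finitely many collapses yield the void complex $\{\}$ (so $\{\}$ is collapsible, $\{\emptyset\}$ is not). *)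

(* Defs.v *)
From HB Require Import structures.
From mathcomp Require Import all_boot all_order all_algebra.
From mathcomp Require Import reals.
Set Implicit Arguments. Unset Strict Implicit. Unset Printing Implicit Defensive.
Import Order.TTheory GRing.Theory Num.Theory.
Local Open Scope ring_scope.

Section Geometry.
Variables (R : realType) (d : nat).

Definition dotp (u v : 'rV[R]_d) : R := \sum_(j < d) u 0 j * v 0 j.

Definition is_open (X : 'rV[R]_d -> Prop) : Prop :=
  forall x, X x -> exists2 e : R, 0 < e &
    forall y : 'rV[R]_d, (forall j, `|y 0 j - x 0 j| < e) -> X y.

Definition is_convex (X : 'rV[R]_d -> Prop) : Prop :=
  forall x y, X x -> X y -> forall t : R, 0 <= t -> t <= 1 ->
    X (t *: x + (1 - t) *: y).

Definition affine_dim (A : 'rV[R]_d -> Prop) (k : nat) : Prop :=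
  exists (x0 : 'rV[R]_d) (M : 'M[R]_d),
    (forall y, A y <-> (y - x0 <= M)%MS) /\ \rank M = k.

End Geometry.

Section Codes.
Variables (R : realType) (d n : nat).
(* hyperplane H_i = {x : w i . x - h i = 0}, oriented by H_i^+ = {w i . x - h i > 0} *)
Variables (w : 'I_n -> 'rV[R]_d) (h : 'I_n -> R) (X : 'rV[R]_d -> Prop).

Definition in_pos (i : 'I_n) (x : 'rV[R]_d) : Prop := dotp (w i) x - h i > 0.

Definition atom (sigma : {set 'I_n}) (x : 'rV[R]_d) : Prop :=
  X x /\ (forall i, i \in sigma -> in_pos i x) /\
  (forall j, j \notin sigma -> ~ in_pos j x).

Definition is_code_of (C : {set {set 'I_n}}) : Prop :=
  forall sigma : {set 'I_n}, sigma \in C <-> exists x, atom sigma x.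

Definition hyp_inter (sigma : {set 'I_n}) (x : 'rV[R]_d) : Prop :=
  forall i, i \in sigma -> dotp (w i) x - h i = 0.

Definition stable_pair : Prop :=
  (forall i, w i != 0) /\ is_open X /\ is_convex X /\
  forall sigma : {set 'I_n},
    (exists x, X x /\ hyp_inter sigma x) ->
    exists k : nat, affine_dim (hyp_inter sigma) k /\
                    (k%:Z = d%:Z - (#|sigma|)%:Z)%R.

End Codes.

Definition stable_hyperplane_code (R : realType) (n : nat)
  (C : {set {set 'I_n}}) : Prop :=
  exists (d : nat) (w : 'I_n -> 'rV[R]_d) (h : 'I_n -> R) (X : 'rV[R]_d -> Prop),
    stable_pair w h X /\ is_code_of w h X C.

(* Vertex set [n] ⊔ \bar[n]:  inl i = i,  inr i = \bar i. *)
Notation pvert n := ('I_n + 'I_n)%type.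
Notation cplx n := {set {set pvert n}}.

Definition Sigma n (sigma : {set 'I_n}) : {set pvert n} :=
  (inl @: sigma) :|: (inr @: ~: sigma).

Definition polar n (C : {set {set 'I_n}}) : cplx n :=
  [set F : {set pvert n} | [exists sigma in C, F \subset Sigma sigma]].

Definition Fplus n (F : {set pvert n}) : {set 'I_n} := [set i | inl i \in F].
Definition Fminus n (F : {set pvert n}) : {set 'I_n} := [set i | inr i \in F].
Definition supp n (F : {set pvert n}) : {set 'I_n} := Fplus F :|: Fminus F.

(* Gamma(2^S): all subsets of S ⊔ \bar S containing no pair {i, \bar i} *)
Definition polar_full n (S : {set 'I_n}) : cplx n :=
  [set G : {set pvert n} | (G \subset (inl @: S) :|: (inr @: S)) &&
           [forall i, ~~ ((inl i \in G) && (inr i \in G))]].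

Definition link n (F : {set pvert n}) (D : cplx n) : cplx n :=
  [set nu in D | [disjoint nu & F] && (nu :|: F \in D)].

Definition facet (T : finType) (D : {set {set T}}) (tau : {set T}) : bool :=
  (tau \in D) && [forall nu in D, ~~ (tau \proper nu)].

Definition free_pair (T : finType) (D : {set {set T}}) (sigma tau : {set T}) : bool :=
  facet D tau && (sigma \proper tau) &&
  [forall nu, (facet D nu && (sigma \subset nu)) ==> (nu == tau)].

Definition collapse (T : finType) (D : {set {set T}}) (sigma : {set T}) :
  {set {set T}} := [set nu in D | ~~ (sigma \subset nu)].

Inductive collapsible (T : finType) : {set {set T}} -> Prop :=
| collapsible_void : collapsible set0
| collapsible_step (D : {set {set T}}) (sigma tau : {set T}) :
    free_pair D sigma tau -> collapsible (collapse D sigma) -> collapsible D.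

Definition nonmaximal_face (T : finType) (D : {set {set T}}) (F : {set T}) : bool :=
  (F \in D) && ~~ facet D F.

(* Main.v *)
Require Import Defs.
From HB Require Import structures.
From mathcomp Require Import all_boot all_order all_algebra.
From mathcomp Require Import reals.
From mathcomp Require Import boolp.
From mathcomp.algebra_tactics Require Import ring lra.
From mathcomp Require Import zify.
Set Implicit Arguments. Unset Strict Implicit. Unset Printing Implicit Defensive.
Import Order.TTheory GRing.Theory Num.Theory.

Section Comb.
Variable T : finType.
Implicit Types (D Q P Y : {set {set T}}) (G rho nu sigma tau : {set T}) (v u : T).

Definition kstar v Q := [set v |: G | G in Q].
Definition Phi v Q Y := kstar v Q :|: Q :|: Y.
Definition dclosed Q := forall G rho, rho \in Q -> G \subset rho -> G \in Q.

Lemma kstarP v Q nu : reflect (exists2 G, G \in Q & nu = v |: G) (nu \in kstar v Q).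
Proof. exact: imsetP. Qed.

Lemma kstar_f v Q G : G \in Q -> v |: G \in kstar v Q.
Proof. by move=> H; apply: imset_f. Qed.

Lemma kstar0 v : kstar v set0 = set0.
Proof. by rewrite /kstar imset0. Qed.

Lemma sub_U1 v G rho : v \notin G -> (G \subset v |: rho) = (G \subset rho).
Proof.
move=> vG; apply/idP/idP => H; last by apply: subset_trans H (subsetUr _ _).
apply/subsetP => x xG; have := subsetP H x xG; rewrite in_setU1 => /orP[/eqP xv|//].
by move: vG; rewrite -xv xG.
Qed.

Lemma U1_sub v G rho : v \notin G -> v \notin rho -> (v |: G \subset v |: rho) = (G \subset rho).
Proof.
move=> vG vr; apply/idP/idP => H; last by apply: setUS.
by rewrite -(sub_U1 _ vG); apply: subset_trans H; apply: subsetUr.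
Qed.

Lemma U1_proper v G rho : v \notin G -> v \notin rho -> (v |: G \proper v |: rho) = (G \proper rho).
Proof. by move=> vG vr; rewrite !properE !U1_sub. Qed.

Lemma proper_U1 v G : v \notin G -> G \proper v |: G.
Proof.
move=> vG; rewrite properE subsetUr /=; apply/negP => /subsetP H.
by move: (H v (setU11 _ _)); rewrite (negbTE vG).
Qed.

Lemma L2 v Q Y G : G \in Q -> (forall rho, rho \in Q -> G \subset rho -> rho = G) ->
  (forall rho, rho \in Q -> v \notin rho) -> (forall rho, rho \in Y -> ~~ (G \subset rho)) ->
  free_pair (Phi v Q Y) G (v |: G) /\ collapse (Phi v Q Y) G = Phi v (Q :\ G) Y.
Proof.
move=> GQ Gmax vQ GY; have vG := vQ _ GQ.
have supG : forall nu, nu \in Phi v Q Y -> G \subset nu -> nu = G \/ nu = v |: G.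
  move=> nu; rewrite /Phi !inE -orbA => /or3P[/kstarP[rho rQ ->]|nQ|nY] Gn.
  - by right; rewrite (Gmax rho rQ) // -(sub_U1 _ vG).
  - by left; apply: Gmax.
  - by move: (GY _ nY); rewrite Gn.
have vGin : v |: G \in Phi v Q Y by rewrite /Phi !inE kstar_f.
have Gin : G \in Phi v Q Y by rewrite /Phi !inE GQ orbT.
have fvG : facet (Phi v Q Y) (v |: G).
  rewrite /facet vGin /=; apply/forallP => nu; apply/implyP => nin; apply/negP => pr.
  have := supG nu nin (subset_trans (subsetUr _ _) (proper_sub pr)).
  case=> E; rewrite E in pr; last by rewrite properxx in pr.
  by move: pr; rewrite properE subsetUr andbF.
split.
  rewrite /free_pair fvG proper_U1 //=; apply/forallP => nu; apply/implyP => /andP[fn Gn].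
  move: fn; rewrite /facet => /andP[nin /forallP fa].
  case: (supG nu nin Gn) => [nG|->//]; move: (fa (v |: G)); rewrite vGin /= nG.
  by rewrite proper_U1.
apply/setP => nu; rewrite /collapse /Phi !inE -!orbA; apply/idP/idP.
  move=> /andP[/or3P[/kstarP[rho rQ ->]|nQ|nY] nG].
  - apply/orP; left; apply/kstarP; exists rho => //; rewrite !inE rQ andbT.
    by apply/eqP => rG; move: nG; rewrite rG subsetUr.
  - by rewrite nQ andbT; apply/orP; right; apply/orP; left; apply/eqP => nG'; move: nG; rewrite nG' subxx.
  - by rewrite nY !orbT.
move=> /or3P[/kstarP[rho]|/andP[nG nQ]|nY].
- rewrite !inE => /andP[rG rQ] ->; rewrite kstar_f //= (sub_U1 _ vG).
  by apply/negP => Gr; move: rG; rewrite (Gmax rho rQ Gr) eqxx.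
- rewrite nQ orbT /=; apply/negP => Gn; move: nG; by rewrite (Gmax nu nQ Gn) eqxx.
- by rewrite nY !orbT (GY _ nY).
Qed.

Lemma L3 v Y P : dclosed P -> collapsible (Phi v P Y) -> forall Q, P \subset Q ->
  (forall rho, rho \in Q -> v \notin rho) ->
  (forall G rho, G \in Q -> G \notin P -> rho \in Y -> ~~ (G \subset rho)) ->
  collapsible (Phi v Q Y).
Proof.
move=> dP cP Q; have [m] := ubnP #|Q|; elim: m Q => // m IH Q ltQ PQ vQ QY.
have [QP|nQP] := eqVneq (Q :\: P) set0.
  suff -> : Q = P by [].
  by apply/eqP; rewrite eqEsubset PQ andbT; rewrite -setD_eq0 QP.
have [G0 G0in] := set0Pn _ nQP.
case: (arg_maxnP (fun G => #|G|) G0in) => G GQP Gmax.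
have : G \in Q :\: P by exact: GQP.
rewrite inE => /andP[GP GQ].
have Gm : forall rho, rho \in Q -> G \subset rho -> rho = G.
  move=> rho rQ Gr; have rP : rho \notin P by apply/negP => rP; move: GP; rewrite (dP _ _ rP Gr).
  have rQP : rho \in Q :\: P by rewrite inE rP rQ.
  have le := Gmax rho rQP.
  by apply/esym/eqP; rewrite eqEcard Gr; exact: le.
have [fp Ec] := L2 GQ Gm vQ (fun rho => QY G rho GQ GP).
apply: collapsible_step fp _; rewrite Ec; apply: IH.
- by move: ltQ; rewrite (cardsD1 G Q) GQ.
- apply/subsetP => x xP; rewrite !inE (subsetP PQ _ xP) andbT.
  by apply/eqP => xG; move: GP; rewrite -xG xP.
- by move=> rho; rewrite !inE => /andP[_ /vQ].
- by move=> G' rho; rewrite !inE => /andP[_ G'Q]; apply: QY.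
Qed.

Lemma L3void v Q : (forall rho, rho \in Q -> v \notin rho) -> collapsible (Phi v Q set0).
Proof.
move=> vQ; apply: (@L3 v set0 set0) => //.
- by move=> G rho; rewrite inE.
- by rewrite /Phi kstar0 !setU0; constructor.
- exact: sub0set.
- by move=> G rho _ _; rewrite inE.
Qed.

Lemma L4 v Y : (forall rho, rho \in Y -> v \notin rho) -> collapsible Y ->
  forall D, collapsible D -> (forall rho, rho \in D -> v \notin rho) ->
  collapsible (kstar v D :|: Y).
Proof.
move=> vY cY D0 cD; elim: cD => [|D sigma tau fp _ IH] vD.
  by rewrite kstar0 set0U.
set Psi := kstar v D :|: Y.
have Ynv : forall nu, nu \in Y -> forall G, v \in G -> ~~ (G \subset nu).
  move=> nu nY G vG; apply/negP => /subsetP H; by move: (vY _ nY); rewrite H.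
have facetE : forall rho, rho \in D -> facet Psi (v |: rho) = facet D rho.
  move=> rho rD; rewrite /facet rD /Psi inE kstar_f //=; apply/forallP/forallP => H nu.
  - apply/implyP => nD; have := H (v |: nu); rewrite inE kstar_f //=.
    by rewrite U1_proper ?vD.
  - apply/implyP; rewrite inE => /orP[/kstarP[rho' r'D ->]|nY].
    + by have := H rho'; rewrite r'D /= U1_proper ?vD.
    + apply/negP => /proper_sub; apply/negP; apply: Ynv nY _ _; exact: setU11.
move: fp; rewrite /free_pair => /andP[/andP[ftau st] /forallP uniq].
have tD : tau \in D by case/andP: ftau.
have vt := vD _ tD.
have vs : v \notin sigma by apply/negP => vs; move: vt; rewrite (subsetP (proper_sub st) _ vs).
have fp' : free_pair Psi (v |: sigma) (v |: tau).
  rewrite /free_pair facetE // ftau U1_proper // st /=; apply/forallP => nu.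
  apply/implyP => /andP[fn sn]; have nin : nu \in Psi by case/andP: fn.
  move: nin; rewrite inE => /orP[/kstarP[rho rD En]|nY].
  - move: fn sn; rewrite En facetE // (U1_sub vs (vD _ rD)) => fr sr.
    by have := uniq rho; rewrite fr sr /= => /eqP ->.
  - by move: sn; rewrite (negbTE (Ynv _ nY _ (setU11 _ _))).
apply: collapsible_step fp' _.
have -> : collapse Psi (v |: sigma) = kstar v (collapse D sigma) :|: Y.
  apply/setP => nu; rewrite /collapse /Psi !inE; apply/idP/idP.
  - move=> /andP[/orP[/kstarP[rho rD ->]|nY] ns]; last by rewrite nY orbT.
    apply/orP; left; apply: kstar_f; rewrite inE rD /=.
    by move: ns; rewrite (U1_sub vs (vD _ rD)).
  - move=> /orP[/kstarP[rho]|nY]; last by rewrite nY orbT Ynv // setU11.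
    rewrite inE => /andP[rD ns] ->; by rewrite kstar_f //= (U1_sub vs (vD _ rD)).
by apply: IH => rho; rewrite inE => /andP[/vD].
Qed.

Lemma comb_main v u (A B : {set {set T}}) : v != u -> dclosed A -> dclosed B ->
  (forall rho, rho \in A -> (v \notin rho) && (u \notin rho)) ->
  (forall rho, rho \in B -> (v \notin rho) && (u \notin rho)) ->
  collapsible (A :&: B) -> collapsible (Phi v A (Phi u B set0)).
Proof.
move=> vu dA dB vA vB cAB.
set Z := Phi u B set0.
have cZ : collapsible Z by apply: L3void => rho /vB /andP[].
have vZ : forall rho, rho \in Z -> v \notin rho.
  move=> rho; rewrite /Z /Phi !inE -orbA => /or3P[/kstarP[b bB ->]||//].
  - by rewrite in_setU1 negb_or vu; case/andP: (vB _ bB).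
  - by move/vB => /andP[].
have vAB : forall rho, rho \in A :&: B -> v \notin rho by move=> rho; rewrite inE => /andP[/vA/andP[]].
have c1 := L4 vZ cZ cAB vAB.
apply: (@L3 v Z (A :&: B)).
- by move=> G rho; rewrite !inE => /andP[rA rB] Gr; rewrite (dA _ _ rA Gr) (dB _ _ rB Gr).
- suff -> : Phi v (A :&: B) Z = kstar v (A :&: B) :|: Z by [].
  apply/setP => nu; rewrite /Phi !inE; case: (nu \in kstar _ _) => //=.
  case nA: (nu \in A); case nB: (nu \in B) => //=.
  by rewrite orbT.
- exact: subsetIl.
- by move=> rho /vA /andP[].
- move=> G rho GA; rewrite inE GA /= => GB; rewrite /Z /Phi !inE -orbA.
  move=> /or3P[/kstarP[b bB ->]|rB|//].
  + case/andP: (vA _ GA) => _ uG; rewrite sub_U1 //; apply/negP => Gb.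
    by move: GB; rewrite (dB _ _ bB Gb).
  + by apply/negP => Gr; move: GB; rewrite (dB _ _ rB Gr).
Qed.

Lemma Phi_k v Q Y G : G \in Q -> v |: G \in Phi v Q Y.
Proof. by move=> GQ; rewrite /Phi !inE kstar_f. Qed.
Lemma Phi_Q v Q Y G : G \in Q -> G \in Phi v Q Y.
Proof. by move=> GQ; rewrite /Phi !inE GQ orbT. Qed.
Lemma Phi_Y v Q Y G : G \in Y -> G \in Phi v Q Y.
Proof. by move=> GY; rewrite /Phi !inE GY orbT. Qed.
Lemma PhiP v Q Y G : G \in Phi v Q Y ->
  [\/ exists2 G', G' \in Q & G = v |: G', G \in Q | G \in Y].
Proof.
rewrite /Phi !inE -orbA => /or3P[/kstarP[G' H1 H2]|H|H]; [apply: Or31; exists G'|apply: Or32|apply: Or33] => //.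
Qed.

End Comb.

Section Dot.
Variables (R : realType) (d : nat).
Local Open Scope ring_scope.
Implicit Types (u x y : 'rV[R]_d).

Lemma dotpDr u x y : dotp u (x + y) = dotp u x + dotp u y.
Proof. by rewrite /dotp -big_split; apply: eq_bigr => j _; rewrite mxE mulrDr. Qed.
Lemma dotpZr u (a : R) x : dotp u (a *: x) = a * dotp u x.
Proof. by rewrite /dotp mulr_sumr; apply: eq_bigr => j _; rewrite mxE mulrCA. Qed.
Lemma dotpNl u x : dotp (- u) x = - dotp u x.
Proof. by rewrite /dotp -sumrN; apply: eq_bigr => j _; rewrite mxE mulNr. Qed.
Lemma dotp0r u : dotp u 0 = 0.
Proof. by rewrite /dotp big1 // => j _; rewrite mxE mulr0. Qed.
Lemma dotp_sumr u (I : finType) (P : pred I) (F : I -> 'rV[R]_d) :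
  dotp u (\sum_(i | P i) F i) = \sum_(i | P i) dotp u (F i).
Proof. by elim/big_rec2: _ => [|i a b _ IH]; [exact: dotp0r | rewrite dotpDr IH]. Qed.

Lemma affE u c (t : R) x y :
  dotp u (t *: x + (1 - t) *: y) - c = t * (dotp u x - c) + (1 - t) * (dotp u y - c).
Proof. rewrite dotpDr !dotpZr; ring. Qed.

Lemma affine_dim_uniq (A : 'rV[R]_d -> Prop) k1 k2 :
  affine_dim A k1 -> affine_dim A k2 -> k1 = k2.
Proof.
have sub : forall x0 (M : 'M[R]_d) x1 (M' : 'M[R]_d),
    (forall y, A y <-> (y - x0 <= M)%MS) -> (forall y, A y <-> (y - x1 <= M')%MS) ->
    (M <= M')%MS.
  move=> x0 M x1 M' H1 H2; apply/row_subP => i.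
  have h0 : (x0 - x1 <= M')%MS by apply/H2/H1; rewrite subrr sub0mx.
  have hi : (x0 + row i M - x1 <= M')%MS.
    by apply/H2/H1; rewrite addrAC subrr add0r row_sub.
  have -> : row i M = (x0 + row i M - x1) - (x0 - x1).
    by rewrite opprB addrA subrK addrAC subrr add0r.
  by rewrite addmx_sub ?eqmx_opp.
move=> [x0 [M [H1 <-]]] [x1 [M' [H2 <-]]]; apply/eqP; rewrite eqn_leq.
by rewrite (mxrankS (sub x0 M x1 M' H1 H2)) (mxrankS (sub x1 M' x0 M H2 H1)).
Qed.

Lemma LIN (c b : R) : 0 < c -> exists2 e : R, 0 < e & forall t, 0 < t -> t <= e -> 0 < c + t * b.
Proof.
move=> c0; have hb := normr_ge0 b; have hb2 : - `|b| <= b.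
  by have := ler_norm (- b); rewrite normrN; lra.
have b1 : 0 < `|b| + 1 by lra.
exists (c / (`|b| + 1)); first exact: divr_gt0.
move=> t t0 te; have E : c / (`|b| + 1) * (`|b| + 1) = c by rewrite divfK // gt_eqF.
move: te E; set e := c / _ => te E; nra.
Qed.

Lemma FF (I : finType) (P : pred I) (Q : I -> R -> Prop) :
  (forall i, P i -> exists2 e : R, 0 < e & forall t, 0 < t -> t <= e -> Q i t) ->
  exists2 e : R, 0 < e & forall t, 0 < t -> t <= e -> forall i, P i -> Q i t.
Proof.
move=> H.
suff : forall s : seq I, exists2 e : R, 0 < e &
    forall t, 0 < t -> t <= e -> forall i, i \in s -> P i -> Q i t.
  case/(_ (enum I)) => e e0 He; exists e => // t t0 te i Pi.
  by apply: He => //; rewrite mem_enum.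
elim => [|i s [e e0 He]]; first by exists 1.
case: (boolP (P i)) => Pi.
  case: (H i Pi) => e' e'0 He'.
  exists (Num.min e e'); first by rewrite lt_min e0 e'0.
  move=> t t0; rewrite le_min => /andP[te te'] k; rewrite inE => /orP[/eqP->|ks] Pk.
  - exact: He'.
  - exact: He.
exists e => // t t0 te k; rewrite inE => /orP[/eqP->|ks] Pk.
- by rewrite Pk in Pi.
- exact: He.
Qed.

Definition LO (X : 'rV[R]_d -> Prop) := forall x v, X x ->
  exists2 e : R, 0 < e & forall t, 0 < t -> t <= e -> X (x + t *: v).

Lemma LO_open X : is_open X -> LO X.
Proof.
move=> oX x v Xx; case: (oX x Xx) => e0 e00 He0.
have [e e1 He] := @FF 'I_d predT (fun j t => 0 < e0 + t * (- `|v 0 j|))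
   (fun j _ => LIN (- `|v 0 j|) e00).
exists e => // t t0 te; apply: He0 => j.
have := He t t0 te j isT; rewrite !mxE addrAC subrr add0r normrM gtr0_norm //; lra.
Qed.

End Dot.

Section Arr.
Variables (R : realType) (d n : nat) (w : 'I_n -> 'rV[R]_d) (h : 'I_n -> R).
Local Open Scope ring_scope.

Definition uw (a : ('I_n + 'I_n)%type) := match a with inl i => w i | inr i => - w i end.
Definition uh (a : ('I_n + 'I_n)%type) := match a with inl i => h i | inr i => - h i end.
Definition g a (x : 'rV[R]_d) := dotp (uw a) x - uh a.

Lemma gE a x v t : g a (x + t *: v) = g a x + t * dotp (uw a) v.
Proof. by rewrite /g dotpDr dotpZr addrAC. Qed.

Lemma gl i x : g (inl i) x = dotp (w i) x - h i. Proof. by []. Qed.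
Lemma gr i x : g (inr i) x = - (dotp (w i) x - h i).
Proof. by rewrite /g /= dotpNl opprB opprK addrC. Qed.

Definition stabP (X : 'rV[R]_d -> Prop) := forall sigma : {set 'I_n},
    (exists x, X x /\ hyp_inter w h sigma x) ->
    exists k : nat, affine_dim (hyp_inter w h sigma) k /\
                    (k%:Z = d%:Z - (#|sigma|)%:Z)%R.

Section WithX.
Variable X : 'rV[R]_d -> Prop.
Hypothesis stab : stabP X.

Lemma G1 T j x : X x -> hyp_inter w h T x -> j \notin T -> dotp (w j) x - h j = 0 ->
  exists v, (forall i, i \in T -> dotp (w i) v = 0) /\ dotp (w j) v != 0.
Proof.
move=> Xx HT jT Hj.
case: (pselect (exists v, (forall i, i \in T -> dotp (w i) v = 0) /\ dotp (w j) v != 0)) => // Hno.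
exfalso.
have Hall : forall v, (forall i, i \in T -> dotp (w i) v = 0) -> dotp (w j) v = 0.
  move=> v Hv; apply/eqP; apply/negPn/negP => Hne; apply: Hno; by exists v.
have Heq : forall y, hyp_inter w h T y <-> hyp_inter w h (j |: T) y.
  move=> y; split => Hy; last by move=> i iT; apply: Hy; rewrite in_setU1 iT orbT.
  have Hd : forall i, i \in T -> dotp (w i) (y - x) = 0.
    move=> i iT; have := Hy i iT; have := HT i iT.
    rewrite dotpDr -scaleN1r dotpZr; lra.
  move=> i; rewrite in_setU1 => /orP[/eqP->|iT]; last exact: Hy.
  have := Hall _ Hd; rewrite dotpDr -scaleN1r dotpZr; lra.
have [k1 [A1 E1]] := stab (ex_intro _ x (conj Xx HT)).
have [k2 [A2 E2]] : exists k : nat, affine_dim (hyp_inter w h (j |: T)) k /\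
                    (k%:Z = d%:Z - (#|j |: T|)%:Z)%R.
  by apply: stab; exists x; split => //; apply/Heq.
have A2' : affine_dim (hyp_inter w h T) k2.
  case: A2 => x0 [M [HM rk]]; exists x0, M; split => // y; rewrite Heq; exact: HM.
have k12 := affine_dim_uniq A1 A2'.
move: E2; rewrite cardsU1 jT -k12 E1 /=; lia.
Qed.

Lemma DB U p (s : 'I_n -> R) : X p -> hyp_inter w h U p ->
  exists v, forall i, i \in U -> dotp (w i) v = s i.
Proof.
move=> Xp Hp.
have : forall j, exists v, j \in U ->
    (forall i, i \in U :\ j -> dotp (w i) v = 0) /\ dotp (w j) v != 0.
  move=> j; case: (boolP (j \in U)) => jU; last by exists 0.
  have [|||v Hv] := @G1 (U :\ j) j p Xp.
  - by move=> i; rewrite inE => /andP[_ iU]; exact: Hp.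
  - by rewrite !inE eqxx.
  - exact: Hp.
  - by exists v.
case/choice => vs Hvs.
exists (\sum_(j in U) (s j / dotp (w j) (vs j)) *: vs j) => i iU.
rewrite dotp_sumr (bigD1 i) //= big1 ?addr0.
  by rewrite dotpZr divfK //; case: (Hvs i iU).
move=> j /andP[jU ji]; rewrite dotpZr; case: (Hvs j jU) => H _.
by rewrite (H i) ?mulr0 // !inE iU andbT eq_sym.
Qed.


Hypothesis lo : LO X.
Hypothesis cvx : is_convex X.

Lemma E x v (P : pred ('I_n + 'I_n)) : X x -> (forall a, P a -> 0 < g a x) ->
  exists2 e : R, 0 < e & forall t, 0 < t -> t <= e ->
    X (x + t *: v) /\ (forall a, P a -> 0 < g a (x + t *: v)).
Proof.
move=> Xx Hp; case: (lo v Xx) => e1 e10 He1.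
have [e2 e20 He2] : exists2 e : R, 0 < e & forall t, 0 < t -> t <= e ->
    forall a, P a -> 0 < g a (x + t *: v).
  apply: (@FF R _ P (fun a t => 0 < g a (x + t *: v))) => a Pa.
  have [e e0 He] := LIN (dotp (uw a) v) (Hp a Pa).
  by exists e => // t t0 te; rewrite gE; apply: He.
exists (Num.min e1 e2); first by rewrite lt_min e10 e20.
move=> t t0; rewrite le_min => /andP[t1 t2]; split; [exact: He1 | exact: He2].
Qed.

Definition realize (T : {set 'I_n}) (G : {set ('I_n + 'I_n)}) x :=
  X x /\ hyp_inter w h T x /\ forall a, a \in G -> 0 < g a x.

Lemma pert T G x v : realize T G x -> (forall i, i \in T -> dotp (w i) v = 0) ->
  exists2 t : R, 0 < t & realize T G (x + t *: v).
Proof.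
move=> [Xx [HT HG]] Hv; have [e e0 He] := E v (P := mem G) Xx HG.
exists e => //; have [Xy Hy] := He e e0 (lexx _); split => //; split => // i iT.
by have := gE (inl i) x v e; rewrite /= Hv // mulr0 addr0 /g /= => ->; apply: HT.
Qed.

Lemma segment T G a b k : realize T G a -> realize T G b ->
  0 < g (inl k) a -> g (inl k) b < 0 -> realize (k |: T) G
    ((- g (inl k) b / (g (inl k) a - g (inl k) b)) *: a +
     (1 - (- g (inl k) b / (g (inl k) a - g (inl k) b))) *: b).
Proof.
move=> [Xa [Ha Ga]] [Xb [Hb Gb]] fa fb.
set t := (- g (inl k) b / _).
have D0 : 0 < g (inl k) a - g (inl k) b by lra.
have tD : t * (g (inl k) a - g (inl k) b) = - g (inl k) b by rewrite /t divfK // gt_eqF.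
have t0 : 0 < t by apply: divr_gt0 => //; lra.
have t1 : t < 1 by rewrite /t ltr_pdivrMr // mul1r; lra.
split; first by apply: cvx => //; lra.
split.
  move=> i; rewrite in_setU1 => /orP[/eqP->|iT].
  - rewrite affE; move: tD; rewrite !gl; nra.
  - by rewrite affE Ha // Hb // !mulr0 addr0.
move=> c cG; rewrite /g affE; have := Ga c cG; have := Gb c cG; rewrite /g; nra.
Qed.

Definition verts (S : {set 'I_n}) : {set ('I_n + 'I_n)} := inl @: S :|: inr @: S.
Definition vidx (a : ('I_n + 'I_n)%type) := match a with inl i => i | inr i => i end.

Lemma inl_inj : injective (@inl 'I_n 'I_n). Proof. by move=> x y []. Qed.
Lemma inr_inj : injective (@inr 'I_n 'I_n). Proof. by move=> x y []. Qed.

Notation L := (@inl 'I_n 'I_n).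
Notation Rr := (@inr 'I_n 'I_n).
Lemma in_inl i (A : {set 'I_n}) : (L i \in L @: A) = (i \in A).
Proof. exact: mem_imset inl_inj. Qed.
Lemma in_inr i (A : {set 'I_n}) : (Rr i \in Rr @: A) = (i \in A).
Proof. exact: mem_imset inr_inj. Qed.
Lemma in_inlr i (A : {set 'I_n}) : (L i \in Rr @: A) = false.
Proof. by apply/imsetP => -[]. Qed.
Lemma in_inrl i (A : {set 'I_n}) : (Rr i \in L @: A) = false.
Proof. by apply/imsetP => -[]. Qed.

Lemma in_verts a S : (a \in verts S) = (vidx a \in S).
Proof. by case: a => i; rewrite !inE ?in_inl ?in_inr ?in_inlr ?in_inrl ?orbF. Qed.

Definition NerveP (T S : {set 'I_n}) (Pp : 'rV[R]_d -> Prop) : {set {set ('I_n + 'I_n)}} :=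
  [set G : {set ('I_n + 'I_n)} | (G \subset verts S) && `[< exists x, realize T G x /\ Pp x >]].
Definition Nerve T S := NerveP T S (fun _ => True).

Lemma NervePP (T S : {set 'I_n}) Pp (G : {set ('I_n + 'I_n)}) : reflect (G \subset verts S /\ exists x, realize T G x /\ Pp x)
   (G \in NerveP T S Pp).
Proof. by rewrite inE; apply: (iffP andP) => -[H1 /asboolP H2]. Qed.


Lemma verts_sub (S1 S2 : {set 'I_n}) : S1 \subset S2 -> verts S1 \subset verts S2.
Proof. by move=> H; apply/subsetP => a; rewrite !in_verts; apply: (subsetP H). Qed.

Lemma realize_sub T (G G' : {set ('I_n + 'I_n)}) x : G' \subset G -> realize T G x -> realize T G' x.
Proof. by move=> s [Xx [HT HG]]; split => //; split => // a /(subsetP s); apply: HG. Qed.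

Lemma realize_U1 T (G : {set ('I_n + 'I_n)}) x a : realize T G x -> 0 < g a x -> realize T (a |: G) x.
Proof.
move=> [Xx [HT HG]] ga; split => //; split => // b; rewrite in_setU1 => /orP[/eqP->//|]; exact: HG.
Qed.

Lemma Nerve_full (T S : {set 'I_n}) : (forall i, i \in T -> i \notin S) ->
  (exists p, X p /\ hyp_inter w h (T :|: S) p) -> Nerve T S = polar_full S.
Proof.
move=> dTS [p [Xp Hp]]; apply/setP => G; rewrite /polar_full [RHS]inE.
apply/NervePP/andP => [[GS [x [[Xx [HT HG]] _]]]|[GS /forallP np]].
  split => //; apply/forallP => i; apply/negP => /andP[li ri].
  by have := HG _ li; have := HG _ ri; rewrite gr gl; lra.
split => //.
pose s i : R := if inl i \in G then 1 else if inr i \in G then -1 else 0.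
have [v Hv] := DB s Xp Hp.
have [e e0 He] := lo v Xp.
exists (p + e *: v); split => //; split; first exact: He.
split.
  move=> i iT; have iTS : i \in T :|: S by rewrite inE iT.
  have iS := dTS i iT.
  have li : inl i \notin G by apply/negP => /(subsetP GS); rewrite in_verts /= (negbTE iS).
  have ri : inr i \notin G by apply/negP => /(subsetP GS); rewrite in_verts /= (negbTE iS).
  have := gE (inl i) p v e; rewrite /= Hv // /s (negbTE li) (negbTE ri) mulr0 addr0 gl => ->.
  exact: Hp.
move=> a aG; have aS : vidx a \in S by rewrite -in_verts (subsetP GS).
have iTS : vidx a \in T :|: S by rewrite inE aS orbT.
case: a aG aS iTS => i aG aS iTS; rewrite gE /=.
- by rewrite Hv // /s aG gl Hp // add0r mulr1.
- have li : inl i \notin G by apply/negP => li; move: (np i); rewrite li aG.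
  by rewrite dotpNl Hv // /s (negbTE li) aG gr Hp // oppr0 add0r; lra.
Qed.

Lemma N0E (T S : {set 'I_n}) k : k \notin T ->
  NerveP T S (fun x => 0 < g (inl k) x) :&: NerveP T S (fun x => 0 < g (inr k) x) =
  Nerve (k |: T) S.
Proof.
move=> kT; apply/setP => G; rewrite inE; apply/andP/NervePP.
  move=> [/NervePP[GS [a [ra pa]]] /NervePP[_ [b [rb pb]]]]; split => //.
  have pb' : g (inl k) b < 0 by rewrite gl; rewrite gr in pb; lra.
  by eexists; split => //; apply: (segment ra rb pa pb').
move=> [GS [x [[Xx [HkT HG]] _]]].
have HT : hyp_inter w h T x by move=> i iT; apply: HkT; rewrite in_setU1 iT orbT.
have fk : dotp (w k) x - h k = 0 by apply: HkT; rewrite in_setU1 eqxx.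
have rx : realize T G x by [].
have [v [Hv c0]] := G1 Xx HT kT fk.
have key : forall u, (forall i, i \in T -> dotp (w i) u = 0) ->
    exists2 y, realize T G y & exists2 t : R, 0 < t & g (inl k) y = t * dotp (w k) u.
  move=> u Hu; have [t t0 ry] := pert rx Hu; exists (x + t *: u) => //; exists t => //.
  by rewrite gE gl fk add0r.
have Hv' : forall i, i \in T -> dotp (w i) (- v) = 0.
  by move=> i iT; rewrite -scaleN1r dotpZr Hv // mulr0.
have [y1 r1 [t1 t10 E1]] := key v Hv.
have [y2 r2 [t2 t20 E2]] := key _ Hv'.
move: E2; rewrite -scaleN1r dotpZr => E2.
have [cpos|cneg|ceq] := ltgtP 0 (dotp (w k) v); last by rewrite -ceq eqxx in c0.
- split; apply/NervePP; split => //.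
  + by exists y1; split => //; rewrite E1; apply: mulr_gt0.
  + by exists y2; split => //; rewrite gr -gl E2; nra.
- split; apply/NervePP; split => //.
  + by exists y2; split => //; rewrite E2; nra.
  + by exists y1; split => //; rewrite gr -gl E1; nra.
Qed.

Lemma NerveE (T S : {set 'I_n}) k : k \notin T -> k \in S ->
  Nerve T S = Phi (inl k) (NerveP T (S :\ k) (fun x => 0 < g (inl k) x))
                 (Phi (inr k) (NerveP T (S :\ k) (fun x => 0 < g (inr k) x)) set0).
Proof.
move=> kT kS.
set A := NerveP T (S :\ k) _; set B := NerveP T (S :\ k) _.
have N0 : A :&: B = Nerve (k |: T) (S :\ k) by apply: N0E.
have vS : verts (S :\ k) \subset verts S by apply: verts_sub; apply: subsetDl.
have kinS : forall a, vidx a = k -> a \in verts S by move=> a ak; rewrite in_verts ak.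
apply/setP => G; apply/idP/idP.
  move/NervePP => [GS [x [rx _]]]; have [Xx [HT HG]] := rx.
  have noboth : ~ (inl k \in G /\ inr k \in G).
    by move=> [l r]; have := HG _ l; have := HG _ r; rewrite gr -gl; lra.
  have subS : forall G' : {set ('I_n + 'I_n)}, G' \subset G -> inl k \notin G' -> inr k \notin G' ->
      G' \subset verts (S :\ k).
    move=> G' s l r. apply/subsetP => a aG'; have := subsetP GS a (subsetP s a aG').
    rewrite !in_verts !inE => ->; rewrite andbT; apply/eqP => ak.
    by case: a ak aG' => i /= ->; [rewrite (negbTE l) | rewrite (negbTE r)].
  case: (boolP (inl k \in G)) => lG.
    have -> : G = inl k |: (G :\ inl k) by rewrite setD1K.
    apply: Phi_k; apply/NervePP; split.
      apply: subS; first exact: subsetDl.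
      - by rewrite !inE eqxx.
      - by rewrite !inE /=; apply/negP => r; apply: noboth.
    by exists x; split; [apply: realize_sub rx; apply: subsetDl | apply: HG].
  case: (boolP (inr k \in G)) => rG.
    have -> : G = inr k |: (G :\ inr k) by rewrite setD1K.
    apply: Phi_Y; apply: Phi_k; apply/NervePP; split.
      apply: subS; first exact: subsetDl.
      - by rewrite !inE.
      - by rewrite !inE eqxx.
    by exists x; split; [apply: realize_sub rx; apply: subsetDl | apply: HG].
  have GS' := subS G (subxx _) lG rG.
  have [gpos|gneg|geq] := ltgtP 0 (g (inl k) x).
  - by apply: Phi_Q; apply/NervePP; split => //; exists x.
  - by apply: Phi_Y; apply: Phi_Q; apply/NervePP; split => //; exists x; split => //; rewrite gr -gl; lra.
  - apply: Phi_Q; have : G \in A :&: B.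
      rewrite N0; apply/NervePP; split => //; exists x; split => //; split => //; split => //.
      move=> i; rewrite in_setU1 => /orP[/eqP->|]; [by rewrite -gl geq | exact: HT].
    by rewrite inE => /andP[].
move=> /PhiP[[G' /NervePP[G'S [x [rx px]]] ->]|/NervePP[GS [x [rx _]]]|/PhiP[[G' /NervePP[G'S [x [rx px]]] ->]|/NervePP[GS [x [rx _]]]|]].
- apply/NervePP; split; last by exists x; split => //; apply: realize_U1.
  by rewrite subUset sub1set kinS //= (subset_trans G'S vS).
- by apply/NervePP; split; [apply: subset_trans vS | exists x].
- apply/NervePP; split; last by exists x; split => //; apply: realize_U1.
  by rewrite subUset sub1set kinS //= (subset_trans G'S vS).
- by apply/NervePP; split; [apply: subset_trans vS | exists x].
- by rewrite inE.
Qed.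

Lemma claim m : forall T S : {set 'I_n}, #|S| = m -> (forall i, i \in T -> i \notin S) ->
  collapsible (Nerve T S) \/ exists p, X p /\ hyp_inter w h (T :|: S) p.
Proof.
elim: m => [|m IH] T S cS dTS.
  have S0 : S = set0 by apply/eqP; rewrite -cards_eq0 cS.
  case: (pselect (exists x, X x /\ hyp_inter w h T x)) => [[x [Xx Hx]]|Hno].
    by right; exists x; rewrite S0 setU0.
  left; suff -> : Nerve T S = set0 by constructor.
  apply/setP => G; rewrite in_set0; apply: negbTE; apply/negP => /NervePP[_ [x [[Xx [HT _]] _]]].
  by apply: Hno; exists x.
have [k kS] : exists k, k \in S by apply/set0Pn; rewrite -card_gt0 cS.
have kT : k \notin T by apply/negP => /dTS; rewrite kS.
have cS' : #|S :\ k| = m by move: cS; rewrite (cardsD1 k S) kS => -[].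
have dTS' : forall i, i \in k |: T -> i \notin S :\ k.
  move=> i; rewrite in_setU1 !inE negb_and negbK => /orP[->//|/dTS ->]; by rewrite orbT.
have [cN0|[p [Xp Hp]]] := IH (k |: T) (S :\ k) cS' dTS'.
- left; rewrite (NerveE kT kS); apply: comb_main => //.
  + move=> G rho /NervePP[rS [x [rx px]]] Gr; apply/NervePP; split.
      exact: subset_trans Gr rS.
    by exists x; split => //; apply: realize_sub rx.
  + move=> G rho /NervePP[rS [x [rx px]]] Gr; apply/NervePP; split.
      exact: subset_trans Gr rS.
    by exists x; split => //; apply: realize_sub rx.
  + move=> rho /NervePP[rS _]; apply/andP; split; apply/negP => /(subsetP rS);
      by rewrite in_verts !inE eqxx.
  + move=> rho /NervePP[rS _]; apply/andP; split; apply/negP => /(subsetP rS);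
      by rewrite in_verts !inE eqxx.
  + by rewrite N0E.
- right; exists p; split => // i; rewrite !inE => iTS; apply: Hp.
  rewrite !inE; case: (i =P k) => //= _; by rewrite andbT orbC.
Qed.

End WithX.
End Arr.

Section Final.
Variables (R : realType) (d n : nat) (w : 'I_n -> 'rV[R]_d) (h : 'I_n -> R).
Variable X : 'rV[R]_d -> Prop.
Hypothesis stab : stabP w h X.
Hypothesis lo : LO X.
Local Open Scope ring_scope.

Lemma in_Sigma_l i (s : {set 'I_n}) : (inl i \in Sigma s) = (i \in s).
Proof. by rewrite /Sigma inE in_inl in_inlr orbF. Qed.
Lemma in_Sigma_r i (s : {set 'I_n}) : (inr i \in Sigma s) = (i \notin s).
Proof. by rewrite /Sigma inE in_inr in_inrl inE. Qed.

Lemma polarP (C : {set {set 'I_n}}) : is_code_of w h X C -> forall G : {set ('I_n + 'I_n)},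
  reflect (exists x, X x /\ forall a, a \in G -> 0 < g w h a x) (G \in polar C).
Proof.
move=> code G; apply: (iffP idP).
  rewrite inE => /existsP[s /andP[sC GS]].
  have [x [Xx [Hpos Hneg]]] := (code s).1 sC.
  pose Z := [set i | dotp (w i) x - h i == 0].
  have HZ : hyp_inter w h Z x by move=> i; rewrite inE => /eqP.
  have [v Hv] := DB stab (fun _ => -1) Xx HZ.
  pose P (a : ('I_n + 'I_n)%type) := match a with
    | inl i => i \in s | inr i => (i \notin s) && (dotp (w i) x - h i != 0) end.
  have HP : forall a, P a -> 0 < g w h a x.
    case=> i /=; first by move/Hpos.
    move=> /andP[/Hneg ni nz]; rewrite gr; move: ni; rewrite /in_pos.
    by move: nz; rewrite neq_lt => /orP[] H1 H2; [lra | exfalso; apply: H2].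
  have [e e0 He] := E lo v (P := P) Xx HP.
  have [Xy Hy] := He e e0 (lexx _).
  exists (x + e *: v); split => // a aG; have := subsetP GS a aG.
  case: a aG => i aG; first by rewrite in_Sigma_l => iS; apply: (Hy (inl i)).
  rewrite in_Sigma_r => ns.
  case: (boolP (dotp (w i) x - h i == 0)) => z; last by apply: (Hy (inr i)); rewrite /= ns.
  rewrite gE /= dotpNl Hv ?inE // gr (eqP z); lra.
move=> [x [Xx Hx]].
pose s := [set i | 0 < dotp (w i) x - h i].
rewrite inE; apply/existsP; exists s; apply/andP; split.
  apply/(code s).2; exists x; split => //; split.
  - by move=> i; rewrite inE.
  - by move=> j; rewrite inE => /negP H1 H2; apply: H1.
apply/subsetP => a aG; have := Hx a aG; case: a aG => i aG.
- by rewrite in_Sigma_l inE.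
- by rewrite in_Sigma_r inE gr => H; apply/negP => H'; lra.
Qed.

End Final.

Theorem theoremB (R : realType) (n : nat) (C : {set {set 'I_n}}) :
  stable_hyperplane_code R C ->
  ~ (exists F : {set ('I_n + 'I_n)%type},
       nonmaximal_face (polar C) F /\
       ~ collapsible (link F (polar C)) /\
       link F (polar C) <> polar_full (~: supp F)).
Proof.
move=> [d [w [h [X [[_ [oX [cX stab]]] code]]]]] [F [_ [ncol nfull]]].
have lo := LO_open oX.
pose XF x := X x /\ forall a, a \in F -> (0 < g w h a x)%R.
have loF : LO XF.
  move=> x v [Xx HF]; have [e e0 He] := E lo v (P := mem F) Xx HF.
  by exists e => // t t0 te; have [H1 H2] := He t t0 te; split.
have cF : is_convex XF.
  move=> x y [Xx Fx] [Xy Fy] t t0 t1; split; first exact: cX.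
  move=> a aF; rewrite /g affE; have := Fx a aF; have := Fy a aF; rewrite /g.
  set A := (dotp _ x - _)%R; set B := (dotp _ y - _)%R => HB HA.
  by have [ab|ba] := lerP A B; nra.
have stF : stabP w h XF by move=> sigma [x [[Xx _] Hx]]; apply: stab; exists x.
have stX : stabP w h X by [].
have linkE : link F (polar C) = Nerve w h XF set0 (~: supp F).
  apply/setP => nu; rewrite inE; apply/idP/idP.
    move=> /and3P[_ dis /(polarP stX lo code)[x [Xx Hx]]]; apply/NervePP; split.
      apply/subsetP => a anu; rewrite in_verts in_setC /supp /Fplus /Fminus !inE negb_or.
      have HnuF : forall b, b \in nu -> b \notin F by move=> b bn; rewrite (disjointFr dis bn).
      have Hx' : forall b, b \in nu :|: F -> (0 < g w h b x)%R by [].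
      case: a anu => i anu /=; apply/andP; split.
      - exact: HnuF anu.
      - apply/negP => iF; have := Hx (inl i); have := Hx (inr i).
        rewrite !inE anu iF orbT => /(_ isT); rewrite gr => H1 /(_ isT); rewrite gl; lra.
      - apply/negP => iF; have := Hx (inl i); have := Hx (inr i).
        rewrite !inE anu iF orbT => /(_ isT); rewrite gr => H1 /(_ isT); rewrite gl; lra.
      - exact: HnuF anu.
    exists x; split => //; split.
      by split => // a aF; apply: Hx; rewrite inE aF orbT.
    split; first by move=> i; rewrite inE.
    by move=> a an; apply: Hx; rewrite inE an.
  move=> /NervePP[nS [x [[[Xx HF] [_ Hn]] _]]].
  have dis : [disjoint nu & F].
    apply/pred0P => a /=; apply/negP => /andP[an aF]; have := subsetP nS a an.
    by rewrite in_verts in_setC /supp /Fplus /Fminus !inE; case: a an aF => i an aF /=; rewrite aF ?orbT.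
  rewrite dis /=; apply/andP; split; apply/(polarP stX lo code); exists x; split => //.
  by move=> a; rewrite inE => /orP[/Hn|/HF].
rewrite linkE in ncol nfull.
have dTS : forall i, i \in (set0 : {set 'I_n}) -> i \notin ~: supp F by move=> i; rewrite inE.
have [c|Hp] := claim stF loF cF (erefl #|~: supp F|) dTS.
- exact: ncol c.
- by apply: nfull; apply: Nerve_full.
Qed.
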